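(* Let $p$ be an odd prime, $V_p=\{2^{n-1}p^m:n,m\in\mathbb{N}\}$, and let $\mathcal{E}_p$ be the set of two-element subsets $E\subseteq V_p$ with $A_E=\{2,p\}$. (1) If $p=3$, then $\mathcal{E}_3$ consists exactly of the doubletons $\{2^{a-1}3^b,2^{a-1}3^{b+1}\}$, $\{2^{a-1}3^b,2^{a-1}3^{b+2}\}$, $\{2^{a-1}3^b,2^{a}3^{b}\}$, $\{2^{a-1}3^b,2^{a+1}3^{b}\}$, $\{2^{a-1}3^{b+1},2^{a+1}3^b\}$, $\{2^{a}3^{b},2^{a-1}3^{b+1}\}$, $\{2^{a+2}3^b,2^{a-1}3^{b+2}\}$ for $a,b\in\mathbb{N}$. (2) If $p=2^m+1>3$ is a Fermat prime, then $\mathcal{E}_p=\big\{\{2^{a-1}p^b,2^{a-1}p^{b+1}\},\{2^{a-1}p^b,2^{a}p^b\},\{2^{m+a-1}p^{b},2^{a-1}p^{b+1}\}:a,b\in\mathbb{N}\big\}$. (3) If $p=2^m-1>3$ is a Mersenne prime, then $\mathcal{E}_p=\big\{\{2^{a-1}p^b,2^{a}p^b\},\{2^{a-1}p^b,2^{m+a-1}p^b\},\{2^{a-1}p^{b+1},2^{m+a-1}p^b\}:a,b\in\mathbb{N}\big\}$. (4) If $p$ is neither a Fermat prime nor a Mersenne prime, then $\mathcal{E}_p=\big\{\{2^ap^b,2^{a-1}p^b\}:a,b\in\mathbb{N}\big\}$.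
   Context: $\mathbb{N}=\{1,2,\dots\}$, $\Pi$ the set of primes. For a nonempty finite $E\subseteq\mathbb{N}$, $A_E=\{q\in\Pi:\exists k\in\mathbb{N}\ (E\subseteq q\mathbb{Z}\cup(k+q\mathbb{Z}))\}$. A prime $p$ is a Fermat prime if $p=2^n+1$ for some $n\in\mathbb{N}$, and a Mersenne prime if $p=2^n-1$ for some $n\in\mathbb{N}$. *)

(* Defs.v *)
From mathcomp Require Import all_boot.
Set Implicit Arguments. Unset Strict Implicit. Unset Printing Implicit Defensive.

(* Naturals are 1,2,...: all exponent parameters below carry an explicit 0 < _ . *)

Definition in_A_E (E : seq nat) (q : nat) : Prop :=
  prime q /\ exists k : nat, 0 < k /\
    forall x, x \in E -> (q %| x) \/ (x = k %[mod q]).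

Definition in_V (p x : nat) : Prop :=
  exists n m : nat, 0 < n /\ 0 < m /\ x = 2 ^ (n - 1) * p ^ m.

Definition in_Ep (p x y : nat) : Prop :=
  x <> y /\ in_V p x /\ in_V p y /\
  (forall q, in_A_E [:: x; y] q <-> (q = 2 \/ q = p)).

Definition same2 (x y u v : nat) : Prop :=
  (x = u /\ y = v) \/ (x = v /\ y = u).

Definition fermat_prime (p : nat) : Prop :=
  prime p /\ exists n, 0 < n /\ p = 2 ^ n + 1.

Definition mersenne_prime (p : nat) : Prop :=
  prime p /\ exists n, 0 < n /\ p = 2 ^ n - 1.

(* Main.v *)
Require Import Defs.
From mathcomp Require Import all_boot zify.


Definition smooth (p N : nat) : Prop := forall q, prime q -> q %| N -> q = 2 \/ q = p.
Definition dist (x y : nat) := x - y + (y - x).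

Lemma dist_mul g u w : dist (g * u) (g * w) = g * dist u w.
Proof. by rewrite /dist -!mulnBr mulnDr. Qed.

Lemma distC x y : dist x y = dist y x.
Proof. by rewrite /dist addnC. Qed.

Lemma smooth_dvd p N M : smooth p N -> M %| N -> smooth p M.
Proof. move=> H d q qp qM; apply: H => //; exact: dvdn_trans qM d. Qed.

Lemma smooth_2p p c d : prime p -> smooth p (2 ^ c * p ^ d).
Proof.
move=> pp q qp; rewrite Euclid_dvdM // !Euclid_dvdX // !dvdn_prime2 //.
by case/orP=> /andP[/eqP-> _]; [left|right].
Qed.

Lemma odd_part n : 0 < n -> exists r o, n = 2 ^ r * o /\ odd o.
Proof.
move=> n0; case: (pfactor_coprime (isT : prime 2) n0) => o co e.
exists (logn 2 n), o; split; first by rewrite {1}e mulnC.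
by move: co; rewrite coprime2n.
Qed.

Lemma smooth_decomp p N : prime p -> smooth p N -> 0 < N -> exists c d, N = 2 ^ c * p ^ d.
Proof.
move=> pp; elim: N {-2}N (leqnn N) => [|K IH] N le sN N0; first by lia.
case: (ltnP 1 N) => [N1|]; last by move=> N1; exists 0, 0; lia.
case: (pdivP N1) => q qp qN.
have [/eqP qe|qe] := boolP (q == 2).
- move: qN; rewrite qe => /dvdnP[k ek].
  have k0 : 0 < k by lia.
  have kK : k <= K by lia.
  have kN : k %| N by rewrite ek dvdn_mulr.
  case: (IH k kK (@smooth_dvd p N k sN kN) k0) => c [d ek'].
  by exists c.+1, d; rewrite ek ek' expnS; lia.
- have qp' : q = p by case: (sN q qp qN) => // E; rewrite E in qe.
  move: qN; rewrite qp' => /dvdnP[k ek].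
  have k0 : 0 < k by lia.
  have p1 : 1 < p by apply: prime_gt1.
  have kK : k <= K by nia.
  have kN : k %| N by rewrite ek dvdn_mulr.
  case: (IH k kK (@smooth_dvd p N k sN kN) k0) => c [d ek'].
  by exists c, d.+1; rewrite ek ek' expnS; lia.
Qed.

Set Implicit Arguments. Unset Strict Implicit.

Lemma oddE n : odd n -> exists k, n = k.*2.+1.
Proof. move=> o; exists n./2; have := odd_double_half n; rewrite o; lia. Qed.

Lemma evenE n : ~~ odd n -> exists k, n = k.*2.
Proof. move=> o; exists n./2; have := odd_double_half n; rewrite (negbTE o); lia. Qed.

Lemma pow_odd_mod p r o w : odd p -> (p + 1 = 2 ^ r * o \/ p = 2 ^ r * o + 1) -> 0 < r ->
  p ^ (w.*2.+1) = p %[mod 2 ^ r.+1].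
Proof.
move=> op e r0.
have [k pk] := oddE op.
have [c E2] : exists c, p ^ 2 = c * 2 ^ r.+1 + 1.
  rewrite !expnS expn0 muln1; move: (2 ^ r) e pk => X e pk; rewrite -mul2n in pk; subst p.
  case: e => e; [exists (o * k) | exists (o * k.+1)]; nia.
have h2 : p ^ 2 = 1 %[mod 2 ^ r.+1] by rewrite E2 modnMDl.
rewrite expnS -mul2n expnM -modnMmr -modnXm h2 modnXm exp1n modnMmr muln1 //.
Qed.

Lemma pow2_mod s r : r <= s -> 2 ^ s %% 2 ^ r = 0.
Proof.
move=> rs; apply/eqP; rewrite -/(dvdn _ _) dvdn_exp2l //.
Qed.

Lemma P1 p v s : 1 < p -> odd p -> 0 < v -> p ^ v + 1 = 2 ^ s -> v = 1.
Proof.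
move=> p1 op v0 e.
have [pk' pk] := oddE op.
case: (boolP (odd v)) => ov.
- have [w vw] := oddE ov.
  case: (@odd_part (p + 1) (ltn_addl _ (ltn0Sn 0))) => r [o [eo oo]].
  have [l ol] := oddE oo.
  have r0 : 0 < r by case: r eo => // eo; rewrite expn0 mul1n in eo; lia.
  have hv := @pow_odd_mod p r o w op (or_introl eo) r0.
  have h : p ^ v + 1 = 2 ^ r %[mod 2 ^ r.+1].
    rewrite vw -modnDml hv modnDml eo ol.
    have -> : 2 ^ r * l.*2.+1 = l * 2 ^ r.+1 + 2 ^ r by rewrite expnS; lia.
    by rewrite modnMDl modn_small // ltn_exp2l.
  case: (ltnP r s) => rs.
  + move: h; rewrite e (@pow2_mod s r.+1 rs) modn_small ?ltn_exp2l // => h0.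
    by move: (expn_gt0 2 r); rewrite -h0.
  + have : 2 ^ s <= 2 ^ r by rewrite leq_exp2l.
    rewrite -e; clear h hv; case: w vw => [|w] vw; first by rewrite vw.
    have : p ^ 2 <= p ^ v by rewrite leq_exp2l // vw.
    rewrite expnS expn1; nia.
- have [w vw] := evenE ov.
  have w0 : 0 < w by lia.
  have h : p ^ v = 1 %[mod 4].
    have -> : p ^ v = (p ^ 2) ^ w by rewrite vw -mul2n expnM.
    rewrite -modnXm.
    have -> : p ^ 2 = (pk' * pk' + pk') * 4 + 1 by rewrite expnS expn1 pk; lia.
    by rewrite modnMDl modnXm exp1n.
  have h' : p ^ v + 1 = 2 %[mod 4] by rewrite -modnDml h.
  case: (ltnP 1 s) => s1.
  + move: h'; rewrite e (@pow2_mod s 2 s1); by move=> /eqP.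
  + have : p ^ 1 <= p ^ v by rewrite leq_exp2l.
    have : 2 ^ s <= 2 ^ 1 by rewrite leq_exp2l.
    rewrite -e expn1; nia.
Qed.

Lemma P2 p t u : 1 < p -> odd p -> 0 < t -> p ^ t = 2 ^ u + 1 -> t = 1 \/ (p = 3 /\ t = 2).
Proof.
move=> p1 op t0 e.
have [pk' pk] := oddE op.
case: (boolP (odd t)) => ot.
- have [w tw] := oddE ot.
  have pm0 : 0 < p - 1 by lia.
  case: (@odd_part (p - 1) pm0) => r [o [eo oo]].
  have [l ol] := oddE oo.
  have r0 : 0 < r by case: r eo => // eo; rewrite expn0 mul1n in eo; lia.
  have eo' : p = 2 ^ r * o + 1 by lia.
  have hv := @pow_odd_mod p r o w op (or_intror eo') r0.
  have h : 2 ^ u + 1 = 2 ^ r * o + 1 %[mod 2 ^ r.+1] by rewrite -e -eo' tw.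
  move/eqP: h; rewrite eqn_modDr => /eqP h.
  have h2 : 2 ^ r * o %% 2 ^ r.+1 = 2 ^ r.
    rewrite ol.
    have -> : 2 ^ r * l.*2.+1 = l * 2 ^ r.+1 + 2 ^ r by rewrite expnS; lia.
    by rewrite modnMDl modn_small // ltn_exp2l.
  case: (ltnP r u) => ru.
  + move: h; rewrite (@pow2_mod u r.+1 ru) h2 => h0.
    by move: (expn_gt0 2 r); rewrite -h0.
  + have : 2 ^ u <= 2 ^ r by rewrite leq_exp2l.
    left; clear h hv; case: w tw => [|w] tw; first by rewrite tw.
    have : p ^ 2 <= p ^ t by rewrite leq_exp2l // tw.
    rewrite expnS expn1; nia.
- have [w tw] := evenE ot.
  have w0 : 0 < w by lia.
  have X1 : 1 <= p ^ w by rewrite expn_gt0; lia.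
  have eX : (p ^ w - 1) * (p ^ w + 1) = 2 ^ u.
    have : p ^ t = p ^ w * p ^ w by rewrite tw -addnn expnD.
    move: (p ^ w) X1 => X X1; nia.
  have d1 : p ^ w + 1 %| 2 ^ u by rewrite -eX dvdn_mull.
  have d2 : p ^ w - 1 %| 2 ^ u by rewrite -eX dvdn_mulr.
  case/(dvdn_pfactor _ _ (isT : prime 2)): d1 => b _ eb.
  have w1 : w = 1.
    apply: (@P1 p w b) => //; lia.
  rewrite w1 expn1 in eb d2.
  case/(dvdn_pfactor _ _ (isT : prime 2)): d2 => a _ ea.
  right; split; last by lia.
  case: a ea => [|[|a]] ea; first by lia.
  + by rewrite expn1 in ea; lia.
  + have h1 : 2 ^ a.+2 %% 4 = 0 by apply: (@pow2_mod _ 2).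
    have h4 : 4 <= 2 ^ a.+2 by rewrite !expnS; have := expn_gt0 2 a; lia.
    have b2 : 2 <= b.
      rewrite leqNgt; apply/negP => hb.
      have : 2 ^ b <= 2 ^ 1 by rewrite leq_exp2l.
      lia.
    have h3 : 2 ^ b %% 4 = 0 by apply: (@pow2_mod _ 2).
    lia.
Qed.

Set Implicit Arguments. Unset Strict Implicit.

Lemma inV_prime p x q : prime p -> in_V p x -> prime q -> q %| x -> q = 2 \/ q = p.
Proof. move=> pp [n [m [_ [_ ->]]]]; exact: smooth_2p. Qed.

Lemma inV_pos p x : prime p -> in_V p x -> 0 < x.
Proof. move=> pp [n [m [_ [_ ->]]]]; by rewrite muln_gt0 !expn_gt0 (prime_gt0 pp). Qed.

Lemma inV_pdvd p x : in_V p x -> p %| x.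
Proof. move=> [n [m [_ [m0 ->]]]]; apply: dvdn_mull; case: m m0 => // m _; by rewrite expnS dvdn_mulr. Qed.

Lemma dist_mod q x y : q %| dist x y -> x = y %[mod q].
Proof.
rewrite /dist; case: (leqP x y) => h.
- have -> : x - y = 0 by lia. rewrite add0n => d. apply/eqP; rewrite eq_sym eqn_mod_dvd //.
- have -> : y - x = 0 by lia. rewrite addn0 => d. apply/eqP; rewrite eqn_mod_dvd //; lia.
Qed.

Lemma mod_dist q x y : x = y %[mod q] -> q %| dist x y.
Proof.
rewrite /dist; case: (leqP x y) => h.
- have -> : x - y = 0 by lia. rewrite add0n => /eqP d. by rewrite eq_sym eqn_mod_dvd in d.
- have -> : y - x = 0 by lia. rewrite addn0 => /eqP d. rewrite eqn_mod_dvd in d => //; lia.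
Qed.

Lemma EpA p x y : prime p -> odd p ->
  in_Ep p x y <-> (x <> y /\ in_V p x /\ in_V p y /\ smooth p (dist x y)).
Proof.
move=> pp op; split.
- move=> [xy [Vx [Vy H]]]; do 3 split => //.
  move=> q qp qd; apply/H; split => //; exists x; split; first exact: inV_pos Vx.
  move=> z; rewrite !inE => /orP[/eqP->|/eqP->]; right => //.
  by rewrite (dist_mod qd).
- move=> [xy [Vx [Vy S]]]; do 3 split => //.
  move=> q; split.
  + move=> [qp [k [k0 H]]].
    have Hx := H x (mem_head _ _).
    have Hy : q %| y \/ y = k %[mod q] by apply: H; rewrite !inE eqxx orbT.
    case: Hx => [Hx|Hx]; first exact: inV_prime Vx qp Hx.
    case: Hy => [Hy|Hy]; first exact: inV_prime Vy qp Hy.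
    by apply: S => //; apply: mod_dist; rewrite Hx Hy.
  + case=> ->; split => //; exists 1; split => // z; rewrite !inE => /orP[/eqP->|/eqP->].
    * case: (boolP (odd x)) => ox; [right; rewrite modn2 ox // | left; rewrite dvdn2 ox //].
    * case: (boolP (odd y)) => ox; [right; rewrite modn2 ox // | left; rewrite dvdn2 ox //].
    * by left; apply: inV_pdvd Vx.
    * by left; apply: inV_pdvd Vy.
Qed.

Set Implicit Arguments. Unset Strict Implicit.

Definition cls p x y : Prop := exists i m, 0 < m /\
 (same2 x y (2^i*p^m) (2 * (2^i*p^m))
 \/ ((exists u, p = 2^u+1) /\ same2 x y (2^i*p^m) (p * (2^i*p^m)))
 \/ (p = 3 /\ same2 x y (2^i*p^m) (9 * (2^i*p^m)))
 \/ (exists s, p = 2^s - 1 /\ same2 x y (2^i*p^m) (2^s * (2^i*p^m)))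
 \/ (exists s, p = 2^s - 1 /\ same2 x y (2^s * (2^i*p^m)) (p * (2^i*p^m)))
 \/ (exists s, p = 2^s + 1 /\ same2 x y (2^s * (2^i*p^m)) (p * (2^i*p^m)))
 \/ (p = 3 /\ same2 x y (8 * (2^i*p^m)) (9 * (2^i*p^m)))).

Lemma cls_sym p x y : cls p x y -> cls p y x.
Proof. rewrite /cls /same2; firstorder. Qed.

Lemma no_common q N : q %| N -> q %| N + 1 -> q = 1.
Proof. by move=> h; rewrite (dvdn_addr _ h) dvdn1 => /eqP. Qed.

Lemma dvd2c c d p : 0 < c -> 2 %| 2 ^ c * p ^ d.
Proof. by case: c => // c _; rewrite expnS -mulnA dvdn_mulr. Qed.

Lemma dvdpd c d p : 0 < d -> p %| 2 ^ c * p ^ d.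
Proof. by case: d => // d _; rewrite expnS mulnCA dvdn_mulr. Qed.

Lemma odd_not2 p t : odd p -> ~ 2 %| p ^ t.
Proof. by move=> op; rewrite Euclid_dvdX // dvdn2 op. Qed.

Lemma odd_notp2 p s : prime p -> odd p -> ~ p %| 2 ^ s.
Proof.
move=> pp op; rewrite Euclid_dvdX // dvdn_prime2 // => /andP[/eqP e _].
by rewrite e in op.
Qed.

Lemma core1 p x i m s t : prime p -> odd p -> 0 < m ->
  x = 2^i*p^m -> (s, t) != (0, 0) -> smooth p (2^s*p^t - 1) ->
  cls p x (x * (2^s*p^t)).
Proof.
move=> pp op m0 ex st S; subst x.
have p1 := prime_gt1 pp.
have p3 : 3 <= p by case: p pp op p1 {S} => [|[|[|]]].
have K1 : 1 <= 2^s*p^t by rewrite muln_gt0 !expn_gt0; lia.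
have N0 : 0 < 2^s*p^t - 1.
  case: s st {S} K1 => [|s]; case: t => [|t] // _ _.
  + have : p ^ 1 <= p ^ t.+1 by rewrite leq_exp2l.
    rewrite expn0 mul1n; lia.
  + have : 2 ^ 1 <= 2 ^ s.+1 by rewrite leq_exp2l.
    rewrite expn0 muln1; lia.
  + have : 2 ^ 1 <= 2 ^ s.+1 by rewrite leq_exp2l.
    have : 1 <= p ^ t.+1 by rewrite expn_gt0; lia.
    nia.
case: (@smooth_decomp p _ pp S N0) => c [d eN].
have eN1 : 2^s*p^t = 2^c*p^d + 1 by lia.
exists i, m; split => //.
have pn1 : p <> 1 by lia.
case: s st {S N0 K1 eN} eN1 => [|s] st eN1.
- case: t st eN1 => [|t] // _ eN1.
  rewrite expn0 mul1n in eN1.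
  case: d eN1 => [|d] eN1.
    rewrite expn0 muln1 in eN1.
    case: (P2 p1 op (ltn0Sn t) eN1) => [[te]|[p3' te]].
    + right; left; split; first by exists c; rewrite -eN1 te expn1.
      by rewrite /same2; left; split => //; rewrite te expn0 mul1n expn1 mulnC.
    + right; right; rewrite /same2; left; split => //; rewrite /same2; left; split => //.
      by rewrite te expn0 mul1n p3' mulnC.
  have := no_common (@dvdpd c d.+1 p (ltn0Sn d)); rewrite -eN1.
  by move=> h; exfalso; apply: pn1; apply: h; rewrite expnS dvdn_mulr.
- have h2 : 2 %| 2 ^ s.+1 * p ^ t by rewrite expnS -mulnA dvdn_mulr.
  case: c eN1 => [|c] eN1; last first.
    by have := no_common (@dvd2c c.+1 d p (ltn0Sn c)); rewrite -eN1 => /(_ h2).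
  rewrite expn0 mul1n in eN1.
  case: t {st} eN1 h2 => [|t] eN1 h2.
  + rewrite expn0 muln1 in eN1.
    case: d eN1 => [|d] eN1.
    * rewrite expn0 in eN1.
      have s0 : s = 0 by case: s {h2} eN1 => // s; rewrite !expnS; have := expn_gt0 2 s; lia.
      left; rewrite /same2; left; split => //; rewrite s0 expn0 muln1 mulnC; lia.
    * have d0 := P1 p1 op (ltn0Sn d) (esym eN1).
      right; right; right; left; exists s.+1; split.
        rewrite eN1 d0 expn1; lia.
      by rewrite /same2; left; split => //; rewrite expn0 muln1 mulnC.
  + case: d eN1 => [|d] eN1.
    * rewrite expn0 in eN1.
      have : 2 ^ 1 <= 2 ^ s.+1 by rewrite leq_exp2l.
      have : p ^ 1 <= p ^ t.+1 by rewrite leq_exp2l.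
      rewrite !expn1; nia.
    * have := no_common (@dvdpd 0 d.+1 p (ltn0Sn d)); rewrite expn0 mul1n -eN1.
      by move=> h; exfalso; apply: pn1; apply: h; apply: dvdn_mull; rewrite expnS dvdn_mulr.
Qed.

Lemma core2 p i m s t : prime p -> odd p -> 0 < m -> 0 < s -> 0 < t ->
  smooth p (dist (2^s) (p^t)) ->
  cls p ((2^i*p^m) * 2^s) ((2^i*p^m) * p^t).
Proof.
move=> pp op m0 s0 t0 S.
have p1 := prime_gt1 pp.
have h2s : 2 %| 2 ^ s by case: s s0 {S} => // s _; rewrite expnS dvdn_mulr.
have hpt : p %| p ^ t by case: t t0 {S} => // t _; rewrite expnS dvdn_mulr.
have n2 := @odd_not2 p t op.
have np := @odd_notp2 p s pp op.
have D0 : 0 < dist (2^s) (p^t).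
  rewrite /dist; case: (eqVneq (2^s) (p^t)) => h.
    by exfalso; apply: n2; rewrite -h.
  move: h; rewrite neq_ltn => /orP[] h; lia.
case: (@smooth_decomp p _ pp S D0) => c [d eD].
have e : dist (2^s) (p^t) + p^t = 2^s \/ dist (2^s) (p^t) + 2^s = p^t by rewrite /dist; lia.
rewrite eD in e.
case: c eD e => [|c] eD e; last first.
  have h := @dvd2c c.+1 d p (ltn0Sn c).
  case: e => e; exfalso; apply: n2.
  - by rewrite -(dvdn_addr _ h) e.
  - by rewrite -e dvdn_add.
case: d eD e => [|d] eD e; last first.
  have h := @dvdpd 0 d.+1 p (ltn0Sn d).
  case: e => e; exfalso; apply: np.
  - by rewrite -e dvdn_add.
  - by rewrite -(dvdn_addr _ h) e.
rewrite expn0 mul1n in e.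
exists i, m; split => //.
case: e => e.
- have t1 := P1 p1 op t0 (etrans (addnC _ _) e).
  right; right; right; right; left; exists s; split.
    rewrite -e t1 expn1; lia.
  by rewrite /same2; left; split; rewrite mulnC // t1 expn1.
- case: (P2 p1 op t0 (esym (etrans (addnC _ _) e))) => [t1|[p3 t2]].
  + right; right; right; right; right; left; exists s; split.
      by move: e; rewrite t1 expn1 ?expn0; lia.
    by rewrite /same2; left; split; rewrite mulnC // t1 expn1.
  + right; right; right; right; right; right; split => //.
    have s3 : s = 3.
      move: e; rewrite p3 t2 => e.
      have : 2 ^ s = 2 ^ 3 by lia.
      by move/eqP; rewrite eqn_exp2l // => /eqP.
    by rewrite /same2; left; split; rewrite mulnC // ?s3 // t2 p3.
Qed.

Lemma core p x y i j m n : prime p -> odd p -> 0 < m -> 0 < n ->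
  x = 2^i*p^m -> y = 2^j*p^n -> x <> y -> smooth p (dist x y) ->
  (i <= j /\ m <= n) \/ (j < i /\ m < n) -> cls p x y.
Proof.
move=> pp op m0 n0 ex ey xy S [[ij mn]|[ji mn]].
- have ey' : y = x * (2 ^ (j - i) * p ^ (n - m)).
    rewrite ey ex; have -> : j = i + (j - i) by lia.
    have -> : n = m + (n - m) by lia.
    rewrite !expnD addKn addKn; lia.
  rewrite ey'; apply: (@core1 p x i m (j - i) (n - m)) => //.
    apply/negP => /eqP [] e1 e2; apply: xy; rewrite ey' e1 e2 expn0 muln1 //.
  apply: (@smooth_dvd p _ _ S); rewrite ey' -{1}(muln1 x) dist_mul dvdn_mull //.
  have : 0 < 2 ^ (j - i) * p ^ (n - m) by rewrite muln_gt0 !expn_gt0 (prime_gt0 pp).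
  rewrite /dist; move: (2 ^ (j - i) * p ^ (n - m)) => K K0.
  have -> : 1 - K + (K - 1) = K - 1 by lia.
  by [].
- have ex' : x = (2^j*p^m) * 2^(i - j).
    rewrite ex; have -> : i = j + (i - j) by lia.
    rewrite expnD addKn; lia.
  have ey' : y = (2^j*p^m) * p^(n - m).
    rewrite ey; have -> : n = m + (n - m) by lia.
    rewrite expnD addKn; lia.
  rewrite ex' ey'; apply: core2 => //; try lia.
  apply: (@smooth_dvd p _ _ S); rewrite ex' ey' dist_mul dvdn_mull //.
Qed.

Lemma master p x y : prime p -> odd p -> in_Ep p x y -> cls p x y.
Proof.
move=> pp op /(EpA _ _ pp op) [xy [[n1 [m [n10 [m0 ex]]]] [[n2 [n [n20 [n0 ey]]]] S]]].
have : ((n1 - 1) <= (n2 - 1) /\ m <= n) \/ ((n2 - 1) < (n1 - 1) /\ m < n) \/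
       ((n2 - 1) <= (n1 - 1) /\ n <= m) \/ ((n1 - 1) < (n2 - 1) /\ n < m) by lia.
case=> [h|[h|h]].
- exact: (core pp op m0 n0 ex ey xy S (or_introl h)).
- exact: (core pp op m0 n0 ex ey xy S (or_intror h)).
- apply: cls_sym; apply: (core pp op n0 m0 ey ex) => //; first by move=> e; apply: xy.
  by rewrite distC.
Qed.

Set Implicit Arguments. Unset Strict Implicit.

Lemma smooth_mul p A B : prime p -> smooth p A -> smooth p B -> smooth p (A * B).
Proof. move=> pp SA SB q qp; rewrite Euclid_dvdM // => /orP[]; [exact: SA|exact: SB]. Qed.

Lemma smooth_of p N c d : prime p -> N = 2 ^ c * p ^ d -> smooth p N.
Proof. by move=> pp ->; apply: smooth_2p. Qed.

Lemma inV_of p e f : 0 < f -> in_V p (2 ^ e * p ^ f).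
Proof. by move=> f0; exists e.+1, f; rewrite subn1. Qed.

Lemma revE p x y g u w : prime p -> odd p -> 0 < g -> smooth p g -> u <> w ->
  smooth p (dist u w) -> in_V p x -> in_V p y -> x = g * u -> y = g * w -> in_Ep p x y.
Proof.
move=> pp op g0 Sg uw Su Vx Vy ex ey; apply/(EpA _ _ pp op); refine (conj _ (conj Vx (conj Vy _))).
- by rewrite ex ey => /eqP; rewrite eqn_pmul2l // => /eqP.
- by rewrite ex ey dist_mul; apply: smooth_mul.
Qed.

Lemma EpC p x y : in_Ep p x y -> in_Ep p y x.
Proof.
move=> [xy [Vx [Vy H]]]; refine (conj _ (conj Vy (conj Vx _))); first by move=> e; apply: xy.
move=> q; rewrite -H /in_A_E; split => -[qp [k [k0 Hk]]]; split => //; exists k; split => //;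
  move=> z zi; apply: Hk; move: zi; rewrite !inE orbC //.
Qed.

Lemma same2_Ep p x y X Y : in_Ep p X Y -> same2 x y X Y -> in_Ep p x y.
Proof. by move=> E [[-> ->]|[-> ->]] //; apply: EpC. Qed.

Lemma same2_eq x y u v u' v' : same2 x y u v -> u = u' -> v = v' -> same2 x y u' v'.
Proof. by move=> S <- <-. Qed.

Lemma same2_sw x y u v : same2 x y u v -> same2 x y v u.
Proof. rewrite /same2; tauto. Qed.

Lemma exp2_inj a b : 2 ^ a = 2 ^ b -> a = b.
Proof. by move/eqP; rewrite eqn_exp2l // => /eqP. Qed.

Lemma FM p a b : p = 2 ^ a + 1 -> p = 2 ^ b - 1 -> p = 3.
Proof.
move=> ea eb.
have b0 : 0 < b by case: b eb => //; rewrite expn0; lia.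
have hb1 : 2 ^ b %% 2 = 0 by apply: (@pow2_mod _ 1).
case: a ea => [|[|a]] ea; first by rewrite expn0 in ea; lia.
  by rewrite ea expn1.
have h1 : 2 ^ a.+2 %% 4 = 0 by apply: (@pow2_mod _ 2).
have h4 : 4 <= 2 ^ a.+2 by rewrite !expnS; have := expn_gt0 2 a; lia.
have b2 : 2 <= b.
  rewrite leqNgt; apply/negP => hb.
  have : 2 ^ b <= 2 ^ 1 by rewrite leq_exp2l.
  lia.
have h3 : 2 ^ b %% 4 = 0 by apply: (@pow2_mod _ 2).
lia.
Qed.



Ltac arith := rewrite ?addnS ?addn0 ?subn1 /= ?expnD ?expnS ?expn0 ?expn1; lia.
Ltac revt pp op g u w :=
  apply: (@revE _ _ _ g u w pp op);
  [ rewrite muln_gt0 !expn_gt0 ?(prime_gt0 pp) //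
  | exact: smooth_2p
  | idtac | idtac
  | apply: inV_of; lia
  | apply: inV_of; lia
  | arith | arith ].

Lemma part4 : (forall p : nat, prime p -> odd p -> ~ fermat_prime p -> ~ mersenne_prime p ->
   forall x y : nat, in_Ep p x y <->
     exists a b : nat, 0 < a /\ 0 < b /\
       same2 x y (2 ^ a * p ^ b) (2 ^ (a - 1) * p ^ b)).
Proof.
move=> p pp op nF nM x y; split.
- move/(master pp op) => [i [m [m0 H]]]; exists i.+1, m; split => //; split => //.
  have p0 := prime_gt0 pp.
  case: H => [H|[[[u eu] _]|[[p3 _]|[[s [es _]]|[[s [es _]]|[[s [es _]]|[p3 _]]]]]]].
  + apply: same2_sw; apply: (same2_eq H); arith.
  + exfalso; apply: nF; split => //; exists u; split => //.
    by case: u eu => // eu; rewrite eu in op.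
  + by exfalso; apply: nF; split => //; exists 1.
  + exfalso; apply: nM; split => //; exists s; split => //.
    by case: s es => // es; rewrite es in p0.
  + exfalso; apply: nM; split => //; exists s; split => //.
    by case: s es => // es; rewrite es in p0.
  + exfalso; apply: nF; split => //; exists s; split => //.
    by case: s es => // es; rewrite es in op.
  + by exfalso; apply: nF; split => //; exists 1.
- move=> [a [b [a0 [b0 H]]]]; apply: (same2_Ep _ H).
  case: a a0 H => // a _ H.
  revt pp op (2 ^ a * p ^ b) 2 1.
  + by [].
  + by apply: (@smooth_of p _ 0 0).
Qed.

Lemma odd_pm p m : 0 < m -> (p = 2 ^ m + 1 \/ p = 2 ^ m - 1) -> odd p.
Proof.
move=> m0 e; have h := @pow2_mod m 1 m0; have := expn_gt0 2 m.
suff: p %% 2 = 1 by rewrite modn2; case: (odd p).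
case: e => ->; lia.
Qed.

Lemma part2 : (forall p m : nat, prime p -> p = 2 ^ m + 1 -> 3 < p ->
   forall x y : nat, in_Ep p x y <->
     exists a b : nat, 0 < a /\ 0 < b /\
       (same2 x y (2 ^ (a - 1) * p ^ b) (2 ^ (a - 1) * p ^ (b + 1)) \/
           same2 x y (2 ^ (a - 1) * p ^ b) (2 ^ a * p ^ b) \/
           same2 x y (2 ^ (m + a - 1) * p ^ b) (2 ^ (a - 1) * p ^ (b + 1)))).
Proof.
move=> p M pp ep p3 x y.
have M0 : 0 < M by case: M ep => // ep; rewrite expn0 in ep; lia.
have op := @odd_pm p M M0 (or_introl ep).
split.
- move/(master pp op) => [i [b [b0 H]]]; exists i.+1, b; split => //; split => //.
  case: H => [H|[[_ H]|[[p3' _]|[[s [es _]]|[[s [es _]]|[[s [es H]]|[p3' _]]]]]]].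
  + right; left; apply: (same2_eq H); arith.
  + left; apply: (same2_eq H); arith.
  + lia.
  + have := FM ep es; lia.
  + have := FM ep es; lia.
  + have sM : s = M by apply: exp2_inj; lia.
    subst s; right; right; apply: (same2_eq H); arith.
  + lia.
- move=> [a [b [a0 [b0 H]]]].
  case: a a0 H => // a _ H.
  case: H => [H|[H|H]]; apply: (same2_Ep _ H).
  + revt pp op (2 ^ a * p ^ b) 1 p.
    * lia.
    * apply: (@smooth_of p _ M 0) => //; rewrite /dist expn0 muln1; lia.
  + revt pp op (2 ^ a * p ^ b) 1 2.
    * by [].
    * by apply: (@smooth_of p _ 0 0).
  + revt pp op (2 ^ a * p ^ b) (2 ^ M) p.
    * lia.
    * apply: (@smooth_of p _ 0 0) => //; rewrite /dist !expn0; lia.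
Qed.

Lemma part3 : (forall p m : nat, prime p -> p = 2 ^ m - 1 -> 3 < p ->
   forall x y : nat, in_Ep p x y <->
     exists a b : nat, 0 < a /\ 0 < b /\
       (same2 x y (2 ^ (a - 1) * p ^ b) (2 ^ a * p ^ b) \/
           same2 x y (2 ^ (a - 1) * p ^ b) (2 ^ (m + a - 1) * p ^ b) \/
           same2 x y (2 ^ (a - 1) * p ^ (b + 1)) (2 ^ (m + a - 1) * p ^ b))).
Proof.
move=> p M pp ep p3 x y.
have M0 : 0 < M by case: M ep => // ep; rewrite expn0 in ep; lia.
have op := @odd_pm p M M0 (or_intror ep).
have hM := expn_gt0 2 M.
split.
- move/(master pp op) => [i [b [b0 H]]]; exists i.+1, b; split => //; split => //.
  case: H => [H|[[[u eu] _]|[[p3' _]|[[s [es H]]|[[s [es H]]|[[s [es H]]|[p3' _]]]]]]].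
  + left; apply: (same2_eq H); arith.
  + have := FM eu ep; lia.
  + lia.
  + have hs := expn_gt0 2 s.
    have sM : s = M by apply: exp2_inj; lia.
    subst s; right; left; apply: (same2_eq H); arith.
  + have hs := expn_gt0 2 s.
    have sM : s = M by apply: exp2_inj; lia.
    subst s; right; right; apply: same2_sw; apply: (same2_eq H); arith.
  + have := FM es ep; lia.
  + lia.
- move=> [a [b [a0 [b0 H]]]].
  case: a a0 H => // a _ H.
  case: H => [H|[H|H]]; apply: (same2_Ep _ H).
  + revt pp op (2 ^ a * p ^ b) 1 2.
    * by [].
    * by apply: (@smooth_of p _ 0 0).
  + revt pp op (2 ^ a * p ^ b) 1 (2 ^ M).
    * lia.
    * apply: (@smooth_of p _ 0 1) => //; rewrite /dist expn0 expn1 mul1n; lia.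
  + revt pp op (2 ^ a * p ^ b) p (2 ^ M).
    * lia.
    * apply: (@smooth_of p _ 0 0) => //; rewrite /dist !expn0; lia.
Qed.

Lemma part1 : (forall x y : nat, in_Ep 3 x y <->
     exists a b : nat, 0 < a /\ 0 < b /\
       (same2 x y (2 ^ (a - 1) * 3 ^ b) (2 ^ (a - 1) * 3 ^ (b + 1)) \/
           same2 x y (2 ^ (a - 1) * 3 ^ b) (2 ^ (a - 1) * 3 ^ (b + 2)) \/
           same2 x y (2 ^ (a - 1) * 3 ^ b) (2 ^ a * 3 ^ b) \/
           same2 x y (2 ^ (a - 1) * 3 ^ b) (2 ^ (a + 1) * 3 ^ b) \/
           same2 x y (2 ^ (a - 1) * 3 ^ (b + 1)) (2 ^ (a + 1) * 3 ^ b) \/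
           same2 x y (2 ^ a * 3 ^ b) (2 ^ (a - 1) * 3 ^ (b + 1)) \/
           same2 x y (2 ^ (a + 2) * 3 ^ b) (2 ^ (a - 1) * 3 ^ (b + 2)))).
Proof.
have pp : prime 3 by [].
have op : odd 3 by [].
move=> x y; split.
- move/(master pp op) => [i [b [b0 H]]]; exists i.+1, b; split => //; split => //.
  case: H => [H|[[_ H]|[[_ H]|[[s [es H]]|[[s [es H]]|[[s [es H]]|[_ H]]]]]]].
  + right; right; left; apply: (same2_eq H); arith.
  + left; apply: (same2_eq H); arith.
  + right; left; apply: (same2_eq H); arith.
  + have s2 : s = 2 by apply: exp2_inj; rewrite expnS expn1; lia.
    subst s; right; right; right; left; apply: (same2_eq H); arith.
  + have s2 : s = 2 by apply: exp2_inj; rewrite expnS expn1; lia.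
    subst s; right; right; right; right; left; apply: same2_sw; apply: (same2_eq H); arith.
  + have s1 : s = 1 by apply: exp2_inj; rewrite expn1; lia.
    subst s; right; right; right; right; right; left; apply: (same2_eq H); arith.
  + right; right; right; right; right; right; apply: (same2_eq H); arith.
- move=> [a [b [a0 [b0 H]]]].
  case: a a0 H => // a _ H.
  case: H => [H|[H|[H|[H|[H|[H|H]]]]]]; apply: (same2_Ep _ H).
  + revt pp op (2 ^ a * 3 ^ b) 1 3; [by [] | by apply: (@smooth_of 3 _ 1 0)].
  + revt pp op (2 ^ a * 3 ^ b) 1 9; [by [] | by apply: (@smooth_of 3 _ 3 0)].
  + revt pp op (2 ^ a * 3 ^ b) 1 2; [by [] | by apply: (@smooth_of 3 _ 0 0)].
  + revt pp op (2 ^ a * 3 ^ b) 1 4; [by [] | by apply: (@smooth_of 3 _ 0 1)].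
  + revt pp op (2 ^ a * 3 ^ b) 3 4; [by [] | by apply: (@smooth_of 3 _ 0 0)].
  + revt pp op (2 ^ a * 3 ^ b) 2 3; [by [] | by apply: (@smooth_of 3 _ 0 0)].
  + revt pp op (2 ^ a * 3 ^ b) 8 9; [by [] | by apply: (@smooth_of 3 _ 0 0)].
Qed.

Unset Implicit Arguments.

Theorem lemma3p18 :
  (* (1) p = 3 *)
  (forall x y : nat, in_Ep 3 x y <->
     exists a b : nat, 0 < a /\ 0 < b /\
       (same2 x y (2 ^ (a - 1) * 3 ^ b) (2 ^ (a - 1) * 3 ^ (b + 1)) \/
           same2 x y (2 ^ (a - 1) * 3 ^ b) (2 ^ (a - 1) * 3 ^ (b + 2)) \/
           same2 x y (2 ^ (a - 1) * 3 ^ b) (2 ^ a * 3 ^ b) \/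
           same2 x y (2 ^ (a - 1) * 3 ^ b) (2 ^ (a + 1) * 3 ^ b) \/
           same2 x y (2 ^ (a - 1) * 3 ^ (b + 1)) (2 ^ (a + 1) * 3 ^ b) \/
           same2 x y (2 ^ a * 3 ^ b) (2 ^ (a - 1) * 3 ^ (b + 1)) \/
           same2 x y (2 ^ (a + 2) * 3 ^ b) (2 ^ (a - 1) * 3 ^ (b + 2)))) /\
  (* (2) p = 2^m + 1 > 3 a Fermat prime *)
  (forall p m : nat, prime p -> p = 2 ^ m + 1 -> 3 < p ->
   forall x y : nat, in_Ep p x y <->
     exists a b : nat, 0 < a /\ 0 < b /\
       (same2 x y (2 ^ (a - 1) * p ^ b) (2 ^ (a - 1) * p ^ (b + 1)) \/
           same2 x y (2 ^ (a - 1) * p ^ b) (2 ^ a * p ^ b) \/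
           same2 x y (2 ^ (m + a - 1) * p ^ b) (2 ^ (a - 1) * p ^ (b + 1)))) /\
  (* (3) p = 2^m - 1 > 3 a Mersenne prime *)
  (forall p m : nat, prime p -> p = 2 ^ m - 1 -> 3 < p ->
   forall x y : nat, in_Ep p x y <->
     exists a b : nat, 0 < a /\ 0 < b /\
       (same2 x y (2 ^ (a - 1) * p ^ b) (2 ^ a * p ^ b) \/
           same2 x y (2 ^ (a - 1) * p ^ b) (2 ^ (m + a - 1) * p ^ b) \/
           same2 x y (2 ^ (a - 1) * p ^ (b + 1)) (2 ^ (m + a - 1) * p ^ b))) /\
  (* (4) p odd prime, neither Fermat nor Mersenne *)
  (forall p : nat, prime p -> odd p -> ~ fermat_prime p -> ~ mersenne_prime p ->
   forall x y : nat, in_Ep p x y <->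
     exists a b : nat, 0 < a /\ 0 < b /\
       same2 x y (2 ^ a * p ^ b) (2 ^ (a - 1) * p ^ b)).
Proof.
split; first exact: part1.
split; first exact: part2.
split; first exact: part3.
exact: part4.
Qed.
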